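(* Let $G$ be a graph with finitely many vertices. Let $\alpha=\alpha_1\alpha_2\cdots\alpha_n$ be a path in $G$ such that there are infinitely many edges from $s(\alpha_1)$ to $r(\alpha_1)$. Let $E$ be the graph with: - vertex set $G^0$; - edge set $G^1\cup\{\alpha^m: m\in\mathbb N\}$, consisting of $G^1$ together with countably infinitely many new edges; - range and source maps extending those of $G$, with $r_E(\alpha^m)=r_G(\alpha)$ and $s_E(\alpha^m)=s_G(\alpha)$. Then $G\sim_M E$.
   Context: A graph $G=(G^0,G^1,r,s)$ has vertex set $G^0$, edge set $G^1$, and range/source maps; multiple (even infinitely many) edges and loops are allowed. A path is a sequence of edges $e_1\cdots e_n$ with $r(e_i)=s(e_{i+1})$; it has $s(e_1\cdots e_n)=s(e_1)$ and $r(e_1\cdots e_n)=r(e_n)$. A source receives no edges, a sink emits no edges, and an infinite emitter emits infinitely many edges. A vertex is singular if it is a sink or infinite emitter, and regular otherwise. Move-equivalence $\sim_M$ is the smallest equivalence relation on graphs with finitely many vertices such that $G\sim_M E$ whenever $E$ is isomorphic to a graph obtained from $G$ by one of the following moves. (S) Delete a regular source together with the edges it emits. (R) For a regular vertex $u$ emitting exactly one edge $f$, with $r(f)\neq u$, and all of whose incoming edges have the same source $v$: delete $u$, $f$ and the edges into $u$, and add for each $e\in r^{-1}(u)$ an edge $[ef]$ from $v$ to $r(f)$. (O) Out-splitting at a non-sink $v$ along a partition $\mathcal E_1,\dots,\mathcal E_n$ of $s^{-1}(v)$ with at most one infinite part. Replace $v$ by $v^1,\dots,v^n$. Each edge $e$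 into $v$ becomes copies $e^1,\dots,e^n$ with $r(e^i)=v^i$ and source $s(e)$, or source $v^j$ if $s(e)=v$ and $e\in\mathcal E_j$. An edge from $v$ to $w\neq v$ lying in $\mathcal E_i$ gets source $v^i$. (I) In-splitting at a regular non-source $v$ along a partition $\mathcal E_1,\dots,\mathcal E_n$ of $r^{-1}(v)$. Replace $v$ by $v^1,\dots,v^n$. Each edge $e$ out of $v$ becomes copies $e^1,\dots,e^n$ with $s(e^i)=v^i$ and range $r(e)$, or range $v^j$ if $r(e)=v$ and $e\in\mathcal E_j$. An edge into $v$ from $w\neq v$ lying in $\mathcal E_i$ gets range $v^i$. *)

(* Defs.v *)
From Stdlib Require Import Relations List.
From mathcomp Require Import all_boot.
Set Implicit Arguments. Unset Strict Implicit. Unset Printing Implicit Defensive.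

Record graph := Graph {
  gV : finType;
  gE : Type;
  gs : gE -> gV;
  gr : gE -> gV
}.

Definition finite_pred (A : Type) (P : A -> Prop) : Prop :=
  exists l : list A, forall a, P a -> List.In a l.

Definition infinite_pred (A : Type) (P : A -> Prop) : Prop := ~ finite_pred P.

Section Vertices.
Variable G : graph.
Definition is_sink (v : gV G) := forall e : gE G, gs e <> v.
Definition is_source (v : gV G) := forall e : gE G, gr e <> v.
Definition is_inf_emitter (v : gV G) := infinite_pred (fun e : gE G => gs e = v).
Definition is_regular (v : gV G) := ~ is_sink v /\ ~ is_inf_emitter v.
End Vertices.

(* [iso_to H X PV Y PE sY rY]: H is isomorphic to the graph whose vertices are
   the elements of X satisfying PV, whose edges are the elements of Y
   satisfying PE, with source sY and range rY. *)
Definition iso_to (H : graph) (X : Type) (PV : X -> Prop) (Y : Type)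
    (PE : Y -> Prop) (sY rY : Y -> X) : Prop :=
  exists (phi0 : gV H -> X) (phi1 : gE H -> Y),
    injective phi0 /\ (forall x, PV x <-> exists v, phi0 v = x) /\
    injective phi1 /\ (forall y, PE y <-> exists e, phi1 e = y) /\
    (forall e, sY (phi1 e) = phi0 (gs e) /\ rY (phi1 e) = phi0 (gr e)).

Definition move_S (G H : graph) : Prop :=
  exists u : gV G, is_regular u /\ is_source u /\
    iso_to H (fun x => x <> u) (fun e => gs e <> u) (@gs G) (@gr G).

(* Move (R).  New edges: old edges not touching u (tag inl), and one edge [ef]
   for each e into u (tag inr e), from v to r(f). *)
Definition move_R (G H : graph) : Prop :=
  exists (u : gV G) (f : gE G) (v : gV G),
    is_regular u /\ gs f = u /\ (forall e, gs e = u -> e = f) /\ gr f <> u /\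
    (forall e, gr e = u -> gs e = v) /\
    iso_to H (fun x => x <> u)
      (fun y : gE G + gE G => match y with
                  | inl e => gs e <> u /\ gr e <> u
                  | inr e => gr e = u end)
      (fun y => match y with inl e => gs e | inr _ => v end)
      (fun y => match y with inl e => gr e | inr _ => gr f end).

(* Move (O): out-splitting at a non-sink v; the partition of s^{-1}(v) into
   nonempty blocks E_1..E_n is given by a labelling c (only its values on
   edges emitted by v matter). Vertex v^i is [inr i], other vertices [inl x].
   Edge e not into v is [inl e]; copies e^i of an edge e into v are [inr (e,i)]. *)
Definition move_O (G H : graph) : Prop :=
  exists (v : gV G) (n : nat) (c : gE G -> 'I_n),
    ~ is_sink v /\
    (forall i, exists e, gs e = v /\ c e = i) /\
    (forall i j, infinite_pred (fun e => gs e = v /\ c e = i) ->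
                 infinite_pred (fun e => gs e = v /\ c e = j) -> i = j) /\
    let src := fun e : gE G => if gs e == v then inr (c e) else inl (gs e) in
    iso_to H
      (fun x : gV G + 'I_n => match x with inl w => w <> v | inr _ => True end)
      (fun y : gE G + (gE G * 'I_n) => match y with
                  | inl e => gr e <> v
                  | inr (e, _) => gr e = v end)
      (fun y => match y with inl e => src e | inr (e, _) => src e end)
      (fun y => match y with inl e => inl (gr e) | inr (_, i) => inr i end).

Definition move_I (G H : graph) : Prop :=
  exists (v : gV G) (n : nat) (c : gE G -> 'I_n),
    is_regular v /\ ~ is_source v /\
    (forall i, exists e, gr e = v /\ c e = i) /\
    let tgt := fun e : gE G => if gr e == v then inr (c e) else inl (gr e) in
    iso_to H
      (fun x : gV G + 'I_n => match x with inl w => w <> v | inr _ => True end)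
      (fun y : gE G + (gE G * 'I_n) => match y with
                  | inl e => gs e <> v
                  | inr (e, _) => gs e = v end)
      (fun y => match y with inl e => inl (gs e) | inr (_, i) => inr i end)
      (fun y => match y with inl e => tgt e | inr (e, _) => tgt e end).

Definition move_step (G H : graph) : Prop :=
  move_S G H \/ move_R G H \/ move_O G H \/ move_I G H.

Definition move_eq : graph -> graph -> Prop := clos_refl_sym_trans graph move_step.

Definition is_path (G : graph) (a1 : gE G) (rest : seq (gE G)) : bool :=
  path (fun e f : gE G => gr e == gs f) a1 rest.

(* E: add countably many new edges alpha^m (m : nat) from s(alpha) to r(alpha). *)
Definition add_path_copies (G : graph) (a1 : gE G) (rest : seq (gE G)) : graph :=
  @Graph (gV G) (gE G + nat)
    (fun y => match y with inl e => gs e | inr _ => gs a1 end)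
    (fun y => match y with inl e => gr e | inr _ => gr (last a1 rest) end).

(* Main.v *)
Require Import Defs.
From mathcomp Require Import all_boot.
From Stdlib Require Import ClassicalEpsilon Classical Relations.
Set Implicit Arguments. Unset Strict Implicit. Unset Printing Implicit Defensive.

Definition pb (P : Prop) : bool := if excluded_middle_informative P then true else false.
Lemma pbP (P : Prop) : reflect P (pb P).
Proof. by rewrite /pb; case: excluded_middle_informative => h; constructor. Qed.

Definition giso (H H' : graph) : Prop :=
  exists (f0 : gV H -> gV H') (g0 : gV H' -> gV H) (f1 : gE H -> gE H') (g1 : gE H' -> gE H),
  [/\ cancel f0 g0, cancel g0 f0, cancel f1 g1, cancel g1 f1 &
      forall e, gs (f1 e) = f0 (gs e) /\ gr (f1 e) = f0 (gr e)].

Lemma giso_sym H H' : giso H H' -> giso H' H.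
Proof.
case=> f0 [g0] [f1] [g1] [c0 c0' c1 c1' h]; exists g0, f0, g1, f1; split=> // e.
have [h1 h2] := h (g1 e); rewrite c1' in h1 h2.
by rewrite h1 h2 !c0.
Qed.

Lemma giso_trans H1 H2 H3 : giso H1 H2 -> giso H2 H3 -> giso H1 H3.
Proof.
case=> f0 [g0] [f1] [g1] [c0 c0' c1 c1' h].
case=> f0' [g0'] [f1'] [g1'] [d0 d0' d1 d1' h'].
exists (f0' \o f0), (g0 \o g0'), (f1' \o f1), (g1 \o g1'); split.
- by move=> x /=; rewrite d0 c0.
- by move=> x /=; rewrite c0' d0'.
- by move=> x /=; rewrite d1 c1.
- by move=> x /=; rewrite c1' d1'.
move=> e /=; case: (h' (f1 e)) => -> ->; by case: (h e) => -> ->.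
Qed.

Lemma iso_to_giso H H' X PV Y PE sY rY :
  @iso_to H X PV Y PE sY rY -> giso H' H -> @iso_to H' X PV Y PE sY rY.
Proof.
case=> p0 [p1] [i0 [s0 [i1 [s1 h]]]] [f0 [g0 [f1 [g1 [c0 c0' c1 c1' hf]]]]].
exists (p0 \o f0), (p1 \o f1); split; [|split; [|split; [|split]]].
- exact: inj_comp i0 (can_inj c0).
- move=> x; rewrite s0; split=> [[v <-]|[v <-]]; [exists (g0 v) | exists (f0 v)]; by rewrite /= ?c0'.
- exact: inj_comp i1 (can_inj c1).
- move=> y; rewrite s1; split=> [[e <-]|[e <-]]; [exists (g1 e)|exists (f1 e)]; by rewrite /= ?c1'.
- move=> e /=; case: (h (f1 e)) => -> ->; by case: (hf e) => -> ->.
Qed.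

Lemma move_step_iso G H H' : move_step G H -> giso H' H -> move_step G H'.
Proof.
move=> [m|[m|[m|m]]] hi; [left|right;left|right;right;left|right;right;right].
- case: m => u [h1 [h2 h3]]; exists u; do 2 split => //; exact: iso_to_giso h3 hi.
- case: m => u [f [v [h1 [h2 [h3 [h4 [h5 h6]]]]]]]; exists u, f, v; do 5 split=> //.
  exact: iso_to_giso h6 hi.
- case: m => v [n [c [h1 [h2 [h3 h4]]]]]; exists v, n, c; do 3 split=> //.
  exact: iso_to_giso h4 hi.
- case: m => v [n [c [h1 [h2 [h3 h4]]]]]; exists v, n, c; do 3 split=> //.
  exact: iso_to_giso h4 hi.
Qed.

Lemma nonsink_ex G (v : gV G) : ~ is_sink v -> exists e : gE G, gs e = v.
Proof. move=> hv; apply: NNPP => hn; apply: hv => e he; apply: hn; by exists e. Qed.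

Lemma ex_nonsink G (e : gE G) : ~ is_sink (gs e).
Proof. by move=> h; apply: (h e). Qed.

Lemma move_O_triv G (v : gV G) : ~ is_sink v -> move_O G G.
Proof.
move=> hv; have [e0 he0] := nonsink_ex hv.
exists v, 1, (fun _ => ord0); split=> //; split.
  by move=> i; exists e0; rewrite (ord1 i).
split; first by move=> i j _ _; rewrite (ord1 i) (ord1 j).
cbv zeta.
exists (fun x => if x == v then inr ord0 else inl x),
       (fun e => if gr e == v then inr (e, ord0) else inl e).
split; [|split; [|split; [|split]]].
- move=> x y; case: eqP => [->|hx]; case: eqP => [->|hy] //; by case.
- case=> [w|i]; split.
  + by move=> hw; exists w; case: eqP.
  + by case=> y; case: eqP => // hy [<-].
  + by move=> _; exists v; rewrite eqxx (ord1 i).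
  + done.
- move=> x y; case: eqP => hx; case: eqP => hy //; by case.
- case=> [e|[e i]]; split.
  + by move=> he; exists e; case: eqP.
  + by case=> y; case: eqP => // hy [<-].
  + by move=> he; exists e; rewrite he eqxx (ord1 i).
  + by case=> y; case: eqP => // hy [<-].
- move=> e; case: eqP => hr /=; done.
Qed.

Lemma giso_move_eq G H (v : gV G) : ~ is_sink v -> giso G H -> move_eq G H.
Proof.
move=> hv hi; apply: rst_step; apply: (@move_step_iso G G H); last exact: giso_sym.
by right; right; left; exact: move_O_triv hv.
Qed.

Lemma half_S2 k : (k.*2.+1)./2 = k.
Proof. by rewrite -add1n (half_bit_double k true). Qed.

Definition plus (H : graph) (a t : gV H) : graph :=
  @Graph (gV H) (gE H + nat)%type
    (fun y => match y with inl e => gs e | inr _ => a end)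
    (fun y => match y with inl e => gr e | inr _ => t end).

Definition redirect (H : graph) (C : gE H -> bool) (t : gV H) : graph :=
  @Graph (gV H) (gE H) (@gs H) (fun e => if C e then t else gr e).

Section Idx.
Variables (A : Type) (g : nat -> A).
Definition idx (e : A) : option nat :=
  match excluded_middle_informative (exists k, g k = e) with
  | left p => Some (proj1_sig (constructive_indefinite_description _ p))
  | right _ => None end.
Lemma idx_some e k : idx e = Some k -> g k = e.
Proof.
rewrite /idx; case: excluded_middle_informative => // p [<-].
exact: proj2_sig (constructive_indefinite_description _ p).
Qed.
Lemma idx_none e : idx e = None -> forall k, g k <> e.
Proof. rewrite /idx; case: excluded_middle_informative => // p _ k hk; apply: p; by exists k. Qed.
Lemma idx_g (hg : injective g) k : idx (g k) = Some k.
Proof.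
case h: (idx (g k)) => [j|]; first by rewrite (hg _ _ (idx_some h)).
by case: (@idx_none _ h k).
Qed.
End Idx.

Definition evC (A : Type) (g : nat -> A) (e : A) : bool :=
  match idx g e with Some k => ~~ odd k | None => false end.

Lemma evC_g A (g : nat -> A) (hg : injective g) k : evC g (g k) = ~~ odd k.
Proof. by rewrite /evC idx_g. Qed.

Lemma evC_ex A (g : nat -> A) e : evC g e -> exists k, g k = e.
Proof. rewrite /evC; case h: idx => [k|] // _; exists k; exact: idx_some h. Qed.

Lemma HH_iso (H : graph) (g : nat -> gE H) (hg : injective g) (a t u : gV H)
  (hs : forall k, gs (g k) = a) (ht : forall k, gr (g k) = t) :
  giso (redirect (evC g) u) (plus a u).
Proof.
pose f1 (e : gE H) : (gE H + nat)%type :=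
  match idx g e with Some k => if odd k then inl (g k./2) else inr k./2 | None => inl e end.
pose g1 (y : (gE H + nat)%type) : gE H :=
  match y with inl e => match idx g e with Some k => g (k.*2.+1) | None => e end
             | inr k => g k.*2 end.
exists id, id, f1, g1; split=> //.
- move=> e; rewrite /f1 /g1; case h: (idx g e) => [k|] /=; last by rewrite h.
  rewrite -(idx_some h); case: ifP => ho; rewrite ?idx_g //;
  by rewrite -[in RHS](odd_double_half k) ho ?add1n ?add0n.
- case=> [e|k]; rewrite /f1 /g1 /=.
    case h: (idx g e) => [k|] /=; last by rewrite h.
    by rewrite idx_g //= odd_double /= uphalf_double (idx_some h).
  by rewrite idx_g // odd_double doubleK.
- move=> e; rewrite /f1 /=; case h: (idx g e) => [k|] /=.
    rewrite -(idx_some h) evC_g //; case: ifP => ho /=; by rewrite ?hs ?ht.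
  by rewrite /evC h.
Qed.

Lemma redirect_iso H (C : gE H -> bool) (t : gV H) (hC : forall e, C e -> gr e = t) :
  giso H (redirect C t).
Proof.
exists id, id, id, id; split=> // e /=; split=> //.
by case: ifP => // /hC ->.
Qed.

Definition IS (H : graph) (x : gV H) (C : gE H -> bool) (u : gV H) : graph :=
  @Graph (gV H + unit)%type (gE H + unit)%type
   (fun y => match y with inl e => inl (gs e) | inr _ => inr tt end)
   (fun y => match y with inl e => if C e then inr tt else inl (gr e) | inr _ => inl u end).

Lemma fin_one (A : Type) (P : A -> Prop) a : (forall y, P y -> y = a) -> finite_pred P.
Proof. move=> h; exists [:: a] => y /h ->; by left. Qed.

Lemma d01 : (ord0 : 'I_2) <> ord_max. Proof. by []. Qed.

Lemma IS_move H (x u a : gV H) (b : gE H) (C : gE H -> bool)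
  (hb : gs b = x) (hbu : gr b = u) (hux : u <> x) (huniq : forall e, gs e = x -> e = b)
  (hC : forall e, C e -> gs e = a /\ gr e = x)
  (e0 : gE H) (he0 : C e0) (e1 : gE H) (he1 : gr e1 = x) (he1' : ~~ C e1) :
  move_I H (IS x C u).
Proof.
have dd := d01.
exists x, 2, (fun e => if C e then ord0 else ord_max).
split; first by split; [move=> h; exact: h b hb | move=> h; exact: h (fin_one huniq)].
split; first by move=> h; exact: h e0 (hC e0 he0).2.
split.
  move=> [[|[|//]] hi].
    by exists e0; rewrite he0 (hC e0 he0).2; split=> //; apply: val_inj.
  by exists e1; rewrite (negbTE he1') he1; split=> //; apply: val_inj.
cbv zeta.
exists (fun y : gV H + unit => match y with inl z => if z == x then inr ord_max else inl z | inr _ => inr ord0 end),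
  (fun y : gE H + unit => match y with inl e => if gs e == x then inr (e, ord_max) else inl e | inr _ => inr (b, ord0) end).
split; [|split; [|split; [|split]]].
- move=> [z|[]] [z'|[]] /=; do ?case: eqP; move=> *; subst; congruence.
- case=> [z|i]; split.
  + by move=> hz; exists (inl z); case: eqP.
  + by case=> [[y|[]]] //=; case: eqP => // hy [<-].
  + move: i => [[|[|//]] hi] _.
      by exists (inr tt); congr inr; apply: val_inj.
    by exists (inl x); rewrite eqxx; congr inr; apply: val_inj.
  + done.
- move=> [z|[]] [z'|[]] /=; do ?case: eqP; move=> *; subst; try congruence.
- case=> [e|[e i]]; split.
  + by move=> he; exists (inl e); case: eqP.
  + by case=> [[y|[]]] //=; case: eqP => // hy [<-].
  + move=> he; move: i => [[|[|//]] hi].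
      by exists (inr tt); rewrite (huniq _ he); congr (inr (_, _)); apply: val_inj.
    by exists (inl e); rewrite he eqxx; congr (inr (_, _)); apply: val_inj.
  + by case=> [[y|[]]] //=; [case: eqP => // hy [<- _] | move=> [<- _]].
- move=> [e|[]] /=.
    split; first by case: eqP => hs //=; rewrite hs eqxx.
    case: (gs e == x) => /=; (case hc: (C e) => /=; [by rewrite (hC e hc).2 eqxx | by case: eqP]).
  by rewrite hbu; split=> //; case: eqP.
Qed.

Lemma R_move H (x u a : gV H) (C : gE H -> bool) (hux : u <> x)
  (hC : forall e, C e -> gs e = a /\ gr e = x) :
  move_R (IS x C u) (redirect C u).
Proof.
exists (inr tt), (inr tt), (inl a).
split.
  split; first by move=> h; exact: h (inr tt) erefl.
  by move=> h; apply: h; apply: (@fin_one _ _ (inr tt)) => [[e|[]]].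
split; first by [].
split; first by move=> [e|[]].
split; first by [].
split; first by move=> [e|[]] //=; case hc: (C e) => // _; rewrite (hC e hc).1.
exists (fun y : gV H => (inl y : gV (IS x C u))),
  (fun e : gE H => if C e then (inr (inl e) : gE (IS x C u) + gE (IS x C u)) else inl (inl e)).
split; [|split; [|split; [|split]]].
- by move=> ? ? [].
- case=> [z|[]]; split=> //; first by exists z.
  by case.
- by move=> e e'; case: ifP; case: ifP => // _ _ [].
- case=> [[e|[]]|[e|[]]] /=; split.
  + case: ifP => hc [h1 h2] //; by exists e; rewrite hc.
  + by case=> e'; case: ifP => // hc [<-]; rewrite hc.
  + by move=> [].
  + by case=> e'; case: ifP.
  + by case: ifP => // hc _; exists e; rewrite hc.
  + by case=> e'; case: ifP => // hc [<-]; rewrite hc.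
  + by [].
  + by case=> e'; case: ifP.
- move=> e /=; case hc: (C e) => /=; first by rewrite (hC e hc).1.
  by rewrite hc.
Qed.

Lemma LH H (x u a : gV H) (b : gE H) (hb : gs b = x) (hbu : gr b = u) (hux : u <> x)
  (huniq : forall e, gs e = x -> e = b) (g : nat -> gE H) (hg : injective g)
  (hgs : forall k, gs (g k) = a) (hgr : forall k, gr (g k) = x) :
  move_eq H (plus a u).
Proof.
pose C := evC g.
have hC : forall e, C e -> gs e = a /\ gr e = x.
  by move=> e he; have [k hk] := @evC_ex _ g e he; rewrite -hk hgs hgr.
apply: (@rst_trans _ _ _ (IS x C u)).
  apply: rst_step; right; right; right.
  apply: (@IS_move H x u a b C hb hbu hux huniq hC (g 0) _ (g 1) (hgr 1)).
    by rewrite /C evC_g.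
  by rewrite /C evC_g.
apply: (@rst_trans _ _ _ (redirect C u)).
  by apply: rst_step; right; left; exact: (R_move hux hC).
apply: (@giso_move_eq (redirect C u) (plus a u) a); last exact: (@HH_iso H g hg a x u hgs hgr).
by have := @ex_nonsink (redirect C u) (g 0); rewrite /= hgs.
Qed.

Definition OS (K : graph) (w : gV K) (b : gE K) : graph :=
  let src := fun e : gE K => if gs e == w then (if pb (e = b) then inr tt else inl w) else inl (gs e) in
  @Graph (gV K + unit)%type (gE K + {e : gE K | gr e = w})%type
    (fun y => match y with inl e => src e | inr e => src (sval e) end)
    (fun y => match y with inl e => inl (gr e) | inr _ => inr tt end).

Lemma OS_move K (w : gV K) (b e' : gE K) (hb : gs b = w) (he' : gs e' = w) (hne : e' <> b) :
  move_O K (OS w b).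
Proof.
have dd := d01.
pose c := fun e : gE K => if pb (e = b) then (ord0 : 'I_2) else ord_max.
have fin0 : finite_pred (fun e => gs e = w /\ c e = ord0).
  apply: (@fin_one _ _ b) => e [_]; rewrite /c; by case: pbP.
exists w, 2, c.
split; first by rewrite -hb; exact: ex_nonsink.
split.
  move=> [[|[|//]] hi].
    exists b; split=> //; rewrite /c; case: pbP => // _; exact: val_inj.
  exists e'; split=> //; rewrite /c; case: pbP => // _; exact: val_inj.
split.
  move=> [[|[|//]] pi] [[|[|//]] pj] hi hj; try (by apply: val_inj).
  - by case: hi; have -> : Ordinal pi = ord0 by apply: val_inj.
  - by case: hj; have -> : Ordinal pj = ord0 by apply: val_inj.
cbv zeta.
pose p0 := fun y : gV K + unit => match y with inl z => if z == w then inr ord_max else inl z | inr _ => inr (ord0 : 'I_2) end.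
have hsrc : forall e, p0 (if gs e == w then (if pb (e = b) then inr tt else inl w) else inl (gs e))
   = (if gs e == w then inr (c e) else inl (gs e)).
  move=> e; rewrite /p0 /c; case: eqP => hs //=; last by case: eqP.
  by case: pbP => _ //=; rewrite eqxx.
exists p0,
  (fun y : gE K + {e : gE K | gr e = w} => match y with inl e => if gr e == w then inr (e, ord_max) else inl e | inr e => inr (sval e, ord0) end).
split; [|split; [|split; [|split]]].
- move=> [z|[]] [z'|[]] /=; rewrite /p0; do ?case: eqP; move=> *; subst; congruence.
- case=> [z|i]; split.
  + by move=> hz; exists (inl z); rewrite /p0; case: eqP.
  + by case=> [[y|[]]] //=; rewrite /p0; case: eqP => // hy [<-].
  + move: i => [[|[|//]] hi] _.
      by exists (inr tt); congr inr; apply: val_inj.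
    by exists (inl w); rewrite /p0 eqxx; congr inr; apply: val_inj.
  + done.
- move=> [e|[e pe]] [f|[f' pf]] /=; last first.
    by case=> h; subst f'; rewrite (eq_irrelevance pe pf).
  1-3: repeat case: eqP => ?; move=> h; congruence.
- case=> [e|[e i]]; split.
  + by move=> he; exists (inl e); case: eqP.
  + by case=> [[y|y]] //=; case: eqP => // hy [<-].
  + move=> he; move: i => [[|[|//]] hi].
      by exists (inr (exist _ e he)); congr (inr (_, _)); apply: val_inj.
    by exists (inl e); rewrite he eqxx; congr (inr (_, _)); apply: val_inj.
  + by case=> [[y|[y py]]] //=; [case: eqP => // hy [<- _] | move=> [<- _]].
- move=> [e|[e pe]] /=.
    split; first by rewrite hsrc; case: eqP.
    by rewrite /p0; case: eqP.
  by rewrite hsrc.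
Qed.

Lemma pb_inl (A B : Type) (e b : A) : pb (@inl A B e = inl b) = pb (e = b).
Proof. case: pbP => h1; case: pbP => h2 //; [by case: h1 => /h2 | by case: h1; rewrite h2]. Qed.

Lemma plusOS_iso G (v w u : gV G) (b : gE G) (huw : u <> w) :
  giso (@plus (OS w b) (inl v) (inl u)) (@OS (plus v u) w (inl b)).
Proof.
pose f1 (y : gE (@plus (OS w b) (inl v) (inl u))) : gE (@OS (plus v u) w (inl b)) :=
  match y with
  | inl (inl e) => inl (inl e)
  | inl (inr s) => inr (exist (fun y : gE (plus v u) => gr y = w) (inl (sval s)) (proj2_sig s))
  | inr k => inl (inr k) end.
pose g1 (y : gE (@OS (plus v u) w (inl b))) : gE (@plus (OS w b) (inl v) (inl u)) :=
  match y with
  | inl (inl e) => inl (inl e)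
  | inl (inr k) => inr k
  | inr (exist (inl e) p) => inl (inr (exist (fun y : gE G => gr y = w) e p))
  | inr (exist (inr k) _) => inr k end.
exists id, id, f1, g1; split=> //.
- by case=> [[e|[e p]]|k].
- case=> [[e|k]|[[e|k] p]] //.
- case=> [[e|[e p]]|k] /=.
  + by rewrite pb_inl.
  + by rewrite pb_inl.
  + split=> //; case: eqP => // ->.
    by case: pbP.
Qed.

Lemma step G (v w u : gV G) (g : nat -> gE G) (hg : injective g)
  (hgs : forall k, gs (g k) = v) (hgr : forall k, gr (g k) = w)
  (b : gE G) (hb : gs b = w) (hbu : gr b = u) : move_eq G (plus v u).
Proof.
have nsv : ~ is_sink v by rewrite -(hgs 0); exact: ex_nonsink.
have hC : forall e, evC g e -> gr e = w.
  by move=> e he; have [k <-] := evC_ex he.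
case: (eqVneq u w) => [->|/eqP huw].
  apply: (giso_move_eq nsv).
  exact: giso_trans (redirect_iso hC) (@HH_iso G g hg v w w hgs hgr).
case: (classic (exists e', gs e' = w /\ e' <> b)) => [[e' [he' hne]]|hn]; last first.
  apply: (@LH G w u v b hb hbu huw _ g hg hgs hgr) => e he.
  by apply: NNPP => hne; apply: hn; exists e.
apply: (@rst_trans _ _ _ (OS w b)).
  by apply: rst_step; right; right; left; exact: OS_move hb he' hne.
apply: (@rst_trans _ _ _ (@plus (OS w b) (inl v) (inl u))).
  pose g' k : gE (OS w b) := inr (exist (fun y : gE G => gr y = w) (g k) (hgr k)).
  apply: (@LH (OS w b) (inr tt) (inl u) (inl v) (inl b) _ _ _ _ g').
  - by rewrite /= hb eqxx; case: pbP.
  - by rewrite /= hbu.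
  - by [].
  - case=> [e|[e pe]] /=; case: eqP => // hs; case: pbP => // heb _.
      by rewrite heb.
    by case: huw; rewrite -hbu -heb pe.
  - by move=> k k' [/hg].
  - move=> k /=; rewrite hgs; case: eqP => // ->; case: pbP => // hgb.
    by case: huw; rewrite -hbu -hgb hgr.
  - by [].
apply: (@rst_trans _ _ _ (@OS (plus v u) w (inl b))).
  apply: (@giso_move_eq (@plus (OS w b) (inl v) (inl u)) (@OS (plus v u) w (inl b)) (inl v)); last exact: plusOS_iso.
  exact: (@ex_nonsink (@plus (OS w b) (inl v) (inl u)) (inr 0)).
apply: rst_sym; apply: rst_step; right; right; left.
apply: (@OS_move (plus v u) w (inl b) (inl e')) => //.
by case.
Qed.

Section Inf.
Variables (A : Type) (P : A -> Prop) (hP : infinite_pred P).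
Lemma inf_ex (l : list A) : exists a, P a /\ ~ List.In a l.
Proof.
apply: NNPP => hn; apply: hP; exists l => a pa; apply: NNPP => hi; apply: hn; by exists a.
Qed.
Definition nx (l : list A) : A := proj1_sig (constructive_indefinite_description _ (inf_ex l)).
Lemma nxP l : P (nx l) /\ ~ List.In (nx l) l.
Proof. exact: proj2_sig (constructive_indefinite_description _ (inf_ex l)). Qed.
Fixpoint lst (n : nat) : list A := match n with 0 => nil | S n => nx (lst n) :: lst n end.
Definition gi n := nx (lst n).
Lemma lst_in m n : m < n -> List.In (gi m) (lst n).
Proof.
elim: n => // n IH; rewrite ltnS leq_eqVlt => /orP [/eqP ->|/IH h] /=; [by left | by right].
Qed.
Lemma gi_inj : injective gi.
Proof.
move=> m n h; case: (ltngtP m n) => // hmn.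
- have := lst_in hmn; rewrite h => hi; by case: (nxP (lst n)).2.
- have := lst_in hmn; rewrite -h => hi; by case: (nxP (lst m)).2.
Qed.
Lemma giP n : P (gi n). Proof. exact: (nxP _).1. Qed.
End Inf.

Lemma swap_iso H (a t1 t2 : gV H) (a' t' : gV H) (ha : a' = a) (ht : t' = t1) :
  giso (@plus (plus a t1) a t2) (@plus (plus a t2) a' t').
Proof.
pose f1 (y : gE (@plus (plus a t1) a t2)) : gE (@plus (plus a t2) a' t') :=
  match y with inl (inl e) => inl (inl e) | inl (inr k) => inr k | inr k => inl (inr k) end.
pose g1 (y : gE (@plus (plus a t2) a' t')) : gE (@plus (plus a t1) a t2) :=
  match y with inl (inl e) => inl (inl e) | inl (inr k) => inr k | inr k => inl (inr k) end.
exists id, id, f1, g1; split=> //.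
- by case=> [[e|k]|k].
- by case=> [[e|k]|k].
- by case=> [[e|k]|k].
Qed.

Lemma last_map_inl H (a t : gV H) (s : seq (gE H)) (x : gE (plus a t)) (y0 : gE H) :
  gr x = gr y0 -> gr (last x (map inl s)) = gr (last y0 s).
Proof. by elim: s x y0 => //= y s IH x y0 _; exact: (IH (inl y) y erefl). Qed.

Lemma path_inl H (a t : gV H) (s : seq (gE H)) (b : gE H) (x : gE (plus a t)) :
  gr x = gr b -> is_path b s -> is_path x (map inl s).
Proof.
case: s => //= y s hx /andP [h1 h2]; rewrite hx h1 /=.
rewrite /is_path in h2 *; rewrite path_map; exact: h2.
Qed.

Lemma main_ind (n : nat) : forall (G : graph) (a1 : gE G) (rest : seq (gE G)),
  size rest = n -> is_path a1 rest ->
  (exists g : nat -> gE G, injective g /\ forall k, gs (g k) = gs a1 /\ gr (g k) = gr a1) ->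
  move_eq G (plus (gs a1) (gr (last a1 rest))).
Proof.
elim: n => [|n IH] G a1 rest.
  case: rest => // _ _ [g [hg hgk]] /=.
  apply: (@giso_move_eq G _ (gs a1)); first exact: ex_nonsink.
  have hC : forall e, evC g e -> gr e = gr a1.
    by move=> e he; have [k <-] := evC_ex he; exact: (hgk k).2.
  exact: giso_trans (redirect_iso hC)
     (@HH_iso G g hg (gs a1) (gr a1) (gr a1) (fun k => (hgk k).1) (fun k => (hgk k).2)).
case: rest => // b rest' [hs] /andP [/eqP hab hp] [g [hg hgk]] /=.
have s1 := @step G (gs a1) (gr a1) (gr b) g hg (fun k => (hgk k).1) (fun k => (hgk k).2) b (esym hab) erefl.
pose G' := @plus G (gs a1) (gr b).
have hp' : is_path (inr 0 : gE G') (map inl rest') by apply: (@path_inl G _ _ _ b).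
have hex : exists g0 : nat -> gE G', injective g0 /\ forall k, gs (g0 k) = gs (inr 0 : gE G') /\ gr (g0 k) = gr (inr 0 : gE G').
  by exists (fun k => (inr k : gE G')); split=> // k k' [].
have s2 := IH G' (inr 0) (map inl rest') _ hp' hex.
rewrite size_map in s2; have {s2} s2 := s2 hs.
pose E := @plus G (gs a1) (gr (last b rest')).
have s3 := @step E (gs a1) (gr a1) (gr b) (fun k => inl (g k)) _
   (fun k => (hgk k).1) (fun k => (hgk k).2) (inl b) (esym hab) erefl.
have {s3} s3 := s3 (fun k k' h => hg k k' (f_equal (fun y => match y with inl e => e | inr _ => g 0 end) h)).
apply: (@rst_trans _ _ _ _ _ s1); apply: (@rst_trans _ _ _ _ _ s2); apply: rst_sym.
apply: (@rst_trans _ _ _ _ _ s3).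
apply: (@giso_move_eq (@plus E (gs a1) (gr b)) _ (gs a1)).
  exact: (@ex_nonsink (@plus E (gs a1) (gr b)) (inr 0)).
apply: swap_iso => //.
exact: last_map_inl.
Qed.

Theorem theorem5p4 (G : graph) (a1 : gE G) (rest : seq (gE G)) :
  is_path a1 rest ->
  infinite_pred (fun e : gE G => gs e = gs a1 /\ gr e = gr a1) ->
  move_eq G (add_path_copies a1 rest).
Proof.
move=> hp hinf.
suff h : move_eq G (plus (gs a1) (gr (last a1 rest))) by exact: h.
have hex : exists g : nat -> gE G, injective g /\ forall k, gs (g k) = gs a1 /\ gr (g k) = gr a1.
  by exists (gi hinf); split; [exact: (@gi_inj _ _ hinf) | exact: (@giP _ _ hinf)].
exact: (@main_ind (size rest) G a1 rest erefl hp hex).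
Qed.
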